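(* Let $m\ge1$, let $k_1,k_2\ge0$ be integers and $r_1,r_2>0$ with $r_1^2+r_2^2=1$. Let $F_1:\mathbb{R}^{m+1}\to\mathbb{R}^{n_1+1}$ and $F_2:\mathbb{R}^{m+1}\to\mathbb{R}^{n_2+1}$ be forms of degrees $k_1$, $k_2$ with $|F_i(\bar x)|^2=r_i^2|\bar x|^{2k_i}$, restricting to $\varphi_1:\mathbb{S}^m\to\mathbb{S}^{n_1}(r_1)$ and $\varphi_2:\mathbb{S}^m\to\mathbb{S}^{n_2}(r_2)$, and let $\varphi=\iota\circ(\varphi_1,\varphi_2):\mathbb{S}^m\to\mathbb{S}^{n_1+n_2+1}$, where $\iota$ is the canonical inclusion of $\mathbb{S}^{n_1}(r_1)\times\mathbb{S}^{n_2}(r_2)$ into $\mathbb{S}^{n_1+n_2+1}$. If $\Delta^0F_1=0$ and $\Delta^0F_2=0$, then $\varphi$ is harmonic if and only if $k_1=k_2$.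
   Context: A form of degree $k$ is a map all of whose components are homogeneous polynomials of degree $k$. $\Delta^0=-\sum_i\partial^2/\partial(x^i)^2$ on $\mathbb{R}^{m+1}$, applied componentwise. $\mathbb{S}^n(r)$ is the sphere of radius $r$ centred at $0$, $\mathbb{S}^m=\mathbb{S}^m(1)$. Harmonic means vanishing tension field $\tau(\varphi)=\operatorname{trace}\nabla d\varphi$. *)

(* Defs.v *)
From HB Require Import structures.
From mathcomp Require Import all_boot all_order all_algebra.
From mathcomp Require Import all_classical all_reals all_analysis.
Set Implicit Arguments. Unset Strict Implicit. Unset Printing Implicit Defensive.
Import Order.TTheory GRing.Theory Num.Theory.
Import numFieldNormedType.Exports.
Local Open Scope ring_scope.

(* Euclidean inner product on row vectors (NB: the analysis norm on matrices
   is the sup norm, so we use the Euclidean dot product explicitly). *)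
Definition dotr {R : realType} {p : nat} (u v : 'rV[R]_p) : R :=
  \sum_(i < p) u 0 i * v 0 i.

Definition ebase {R : realType} {p : nat} (i : 'I_p) : 'rV[R]_p := delta_mx 0 i.

Definition homog_poly {R : realType} (m k : nat) (f : 'rV[R]_(m.+1) -> R) : Prop :=
  exists c : {ffun {ffun 'I_(m.+1) -> 'I_k.+1} -> R},
    forall x, f x = \sum_(a : {ffun 'I_(m.+1) -> 'I_k.+1}
                        | (\sum_(i < m.+1) (a i : nat) == k)%N)
                     c a * \prod_(i < m.+1) x 0 i ^+ a i.

Definition is_form {R : realType} (m n k : nat)
  (F : 'rV[R]_(m.+1) -> 'rV[R]_n) : Prop :=
  forall j : 'I_n, homog_poly k (fun x => F x 0 j).

Definition flat_laplacian_zero {R : realType} (m n : nat)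
  (F : 'rV[R]_(m.+1) -> 'rV[R]_n) : Prop :=
  forall (j : 'I_n) (x : 'rV[R]_(m.+1)),
    - (\sum_(i < m.+1)
         'D_(ebase i) ('D_(ebase i) (fun y => F y 0 j)) x) = 0.

Definition tproj {R : realType} {p : nat} (y v : 'rV[R]_p) : 'rV[R]_p :=
  v - dotr v y *: y.

Definition geod_second {R : realType} {m p : nat}
  (phi : 'rV[R]_(m.+1) -> 'rV[R]_p) (x e : 'rV[R]_(m.+1)) : 'rV[R]_p :=
  derive1 (derive1 (fun t : R => phi (cos t *: x + sin t *: e))) 0.

(* phi : S^m -> S^{p-1} (unit spheres) is harmonic: it maps the sphere into
   the sphere, and its tension field tau(phi) = trace nabla d phi vanishes.
   Along a geodesic gamma of S^m, (nabla d phi)(gamma',gamma') is the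
   tangential (to S^{p-1}) part of (phi o gamma)''; the trace is taken over
   an orthonormal frame e_1..e_m of T_x S^m (any such frame; the trace is
   frame independent). *)
Definition harmonic_sphere_map {R : realType} {m p : nat}
  (phi : 'rV[R]_(m.+1) -> 'rV[R]_p) : Prop :=
  (forall x, dotr x x = 1 -> dotr (phi x) (phi x) = 1) /\
  forall (x : 'rV[R]_(m.+1)) (e : 'I_m -> 'rV[R]_(m.+1)),
    dotr x x = 1 ->
    (forall a, dotr (e a) x = 0) ->
    (forall a b, dotr (e a) (e b) = (a == b)%:R) ->
    \sum_(a < m) tproj (phi x) (geod_second phi x (e a)) = 0.

(* Main.v *)
Require Import Defs.
From HB Require Import structures.
From mathcomp Require Import all_boot all_order all_algebra.
From mathcomp Require Import all_classical all_reals all_analysis.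
From mathcomp Require Import ring lra zify.
Import Order.TTheory GRing.Theory Num.Theory.
Import numFieldNormedType.Exports.
Local Open Scope ring_scope.
Set Implicit Arguments. Unset Strict Implicit.


Section PF.
Variables (R : realType) (n : nat).
Local Notation V := 'rV[R]_n.

Inductive pf : (V -> R) -> Prop :=
| pf_cst c : pf (cst c)
| pf_coord j : pf (fun x => x 0 j)
| pf_add f g : pf f -> pf g -> pf (f + g)
| pf_mul f g : pf f -> pf g -> pf (f * g).

Lemma coord_derivable j (x v : V) : derivable (fun y : V => y 0 j) x v.
Proof. by have := (@derivable_mxP R V 1 n id x v).1 (@derivable_id _ _ x v) 0 j. Qed.

Lemma coord_derive j (x v : V) : 'D_v (fun y : V => y 0 j) x = v 0 j.
Proof.
have := derive_mx (@derivable_id _ _ x v).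
by rewrite derive_id => /(congr1 (fun M : 'M[R]_(1, n) => M 0 j)); rewrite mxE.
Qed.

Lemma pf_derivable f : pf f -> forall x v, derivable f x v.
Proof.
elim=> [c|j|f1 f2 _ h1 _ h2|f1 f2 _ h1 _ h2] x v.
- exact: derivable_cst.
- exact: coord_derivable.
- exact: derivableD.
- exact: derivableM.
Qed.

Lemma pf_D f : pf f -> forall v, pf ('D_v f).
Proof.
elim=> [c|j|f1 f2 p1 h1 p2 h2|f1 f2 p1 h1 p2 h2] v.
- have -> : 'D_v (cst c) = cst 0 by apply: funext => x; rewrite derive_cst.
  exact: pf_cst.
- have -> : 'D_v (fun y : V => y 0 j) = cst (v 0 j).
    by apply: funext => x; rewrite coord_derive.
  exact: pf_cst.
- have -> : 'D_v (f1 + f2) = 'D_v f1 + 'D_v f2.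
    by apply: funext => x; rewrite deriveD //; apply: pf_derivable.
  exact: pf_add.
- have -> : 'D_v (f1 * f2) = f1 * 'D_v f2 + f2 * 'D_v f1.
    by apply: funext => x; rewrite deriveM //; apply: pf_derivable.
  by apply: pf_add; apply: pf_mul.
Qed.

Definition ebase' (i : 'I_n) : V := delta_mx 0 i.

Lemma sum_delta (F : 'I_n -> R) j : \sum_i F i * (delta_mx 0 i : V) 0 j = F j.
Proof.
rewrite (bigD1 j) //= big1 => [|i /negbTE hi]; first by rewrite mxE !eqxx /= mulr1 addr0.
by rewrite mxE eq_sym hi andbF mulr0.
Qed.

Lemma pf_chain f : pf f -> forall (c : R -> V) (c' : 'I_n -> R) (t : R),
  (forall i, is_derive t (1:R) (fun s : R => c s 0 i) (c' i)) ->
  is_derive t (1:R) (f \o c) (\sum_i c' i * 'D_(delta_mx 0 i) f (c t)).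
Proof.
elim=> [a|j|f1 f2 p1 h1 p2 h2|f1 f2 p1 h1 p2 h2] c c' t hc.
- apply: is_derive_eq; first exact: is_derive_cst.
  by rewrite big1 // => i _; rewrite derive_cst mulr0.
- apply: (is_derive_eq (hc j)).
  under eq_bigr do rewrite coord_derive.
  by rewrite sum_delta.
- apply: (is_derive_eq (is_deriveD (h1 _ _ _ hc) (h2 _ _ _ hc))).
  rewrite -big_split /=; apply: eq_bigr => i _.
  by rewrite deriveD ?mulrDr //; apply: pf_derivable.
- apply: (is_derive_eq (is_deriveM (h1 _ _ _ hc) (h2 _ _ _ hc))).
  rewrite /= /GRing.scale /=.

  rewrite !big_distrr -big_split /=; apply: eq_bigr => i _.
  rewrite deriveM /= ?mulrDr; try by apply: pf_derivable.
  rewrite /GRing.scale /=. ring.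
Qed.

End PF.



Section D1.
Variable R : realType.

Lemma isd_lin (t a : R) : is_derive t (1:R) (fun s : R => s * a) a.
Proof.
apply: (is_derive_eq (is_deriveM (@is_derive_id _ _ t 1) (is_derive_cst a t 1))).
by rewrite /= /GRing.scale /=; ring.
Qed.

Lemma isd_scal (t a d : R) (g : R -> R) : is_derive t (1:R) g d ->
  is_derive t (1:R) (fun s => a * g s) (a * d).
Proof. by move=> h; apply: (is_derive_eq (is_deriveZ a h)). Qed.

Lemma isd_sum n (G : 'I_n -> R -> R) (d : 'I_n -> R) (t : R) :
  (forall i, is_derive t (1:R) (G i) (d i)) ->
  is_derive t (1:R) (fun s => \sum_(i < n) G i s) (\sum_i d i).
Proof. by move=> h; have := is_derive_sum h; rewrite fct_sumE. Qed.

Lemma isd_pow (t a : R) k :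
  is_derive t (1:R) (fun s : R => s ^+ k * a) (k%:R * t ^+ k.-1 * a).
Proof.
have h := is_deriveM (is_deriveX k (@is_derive_id _ _ t 1)) (is_derive_cst a t 1).
rewrite exprfctE in h.
apply: (is_derive_eq h).
by rewrite /= /GRing.scale /=; ring.
Qed.

Lemma isd_cs (t a b : R) :
  is_derive t (1:R) (fun s => cos s * a + sin s * b) (- sin t * a + cos t * b).
Proof.
have h := is_deriveD (is_deriveM (is_derive_cos t) (is_derive_cst a t 1))
                     (is_deriveM (is_derive_sin t) (is_derive_cst b t 1)).
apply: (is_derive_eq h).
by rewrite /= /GRing.scale /=; ring.
Qed.

Lemma isd_uniq (g : R -> R) t d1 d2 : is_derive t (1:R) g d1 ->
  is_derive t (1:R) g d2 -> d1 = d2.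
Proof. by move=> h1 h2; rewrite -(@derive_val _ _ _ _ _ _ _ h1) derive_val. Qed.

End D1.

Section PF2.
Variables (R : realType) (n : nat).
Local Notation V := 'rV[R]_n.

Lemma pf_scal (c : R) (f : V -> R) : pf f -> pf (fun x => c * f x).
Proof.
move=> h; have -> : (fun x => c * f x) = cst c * f by [].
exact: (pf_mul (pf_cst _ c) h).
Qed.

Lemma pf_sumf (T : Type) (r : seq T) (P : pred T) (F : T -> V -> R) :
  (forall a, pf (F a)) -> pf (fun x => \sum_(a <- r | P a) F a x).
Proof.
move=> hF; elim: r => [|a r ih].
  have -> : (fun x : V => \sum_(a <- [::] | P a) F a x) = cst 0.
    by apply: funext => x; rewrite big_nil.
  exact: pf_cst.
have [Pa|nPa] := boolP (P a).
  have -> : (fun x : V => \sum_(b <- a :: r | P b) F b x) =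
            F a + (fun x => \sum_(b <- r | P b) F b x).
    by apply: funext => x; rewrite big_cons Pa.
  exact: pf_add.
have -> : (fun x : V => \sum_(b <- a :: r | P b) F b x) =
          (fun x => \sum_(b <- r | P b) F b x).
  by apply: funext => x; rewrite big_cons (negbTE nPa).
exact: ih.
Qed.

Lemma pf_prodf (T : Type) (r : seq T) (F : T -> V -> R) :
  (forall a, pf (F a)) -> pf (fun x => \prod_(a <- r) F a x).
Proof.
move=> hF; elim: r => [|a r ih].
  have -> : (fun x : V => \prod_(a <- [::]) F a x) = cst 1.
    by apply: funext => x; rewrite big_nil.
  exact: pf_cst.
have -> : (fun x : V => \prod_(b <- a :: r) F b x) =
          F a * (fun x => \prod_(b <- r) F b x).
  by apply: funext => x; rewrite big_cons.
exact: pf_mul.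
Qed.

Lemma pf_exp (f : V -> R) k : pf f -> pf (fun x => f x ^+ k).
Proof.
move=> hf; elim: k => [|k ih].
  have -> : (fun x : V => f x ^+ 0) = cst 1 by apply: funext => x; rewrite expr0.
  exact: pf_cst.
have -> : (fun x : V => f x ^+ k.+1) = f * (fun x => f x ^+ k).
  by apply: funext => x; rewrite exprS.
exact: pf_mul.
Qed.

End PF2.

Section Homog.
Variables (R : realType) (m : nat).
Local Notation V := 'rV[R]_(m.+1).

Lemma homog_pf k (f : V -> R) : homog_poly k f -> pf f.
Proof.
case=> c hf.
have -> : f = (fun x => \sum_(a : {ffun 'I_(m.+1) -> 'I_k.+1}
                        | (\sum_(i < m.+1) (a i : nat) == k)%N)
                     c a * \prod_(i < m.+1) x 0 i ^+ a i).
  by apply: funext => x; rewrite hf.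
apply: pf_sumf => a; apply: pf_scal; apply: pf_prodf => i.
exact: pf_exp (pf_coord _ _).
Qed.

Lemma homog_scale k (f : V -> R) (s : R) (x : V) : homog_poly k f ->
  f (s *: x) = s ^+ k * f x.
Proof.
case=> c hf; rewrite !hf big_distrr /=; apply: eq_bigr => a /eqP ha.
under eq_bigr do rewrite mxE exprMn.
by rewrite big_split /= prodrXr ha; ring.
Qed.


Lemma euler1 k (f : V -> R) (x : V) (s : R) : homog_poly k f ->
  \sum_i x 0 i * 'D_(delta_mx 0 i) f (s *: x) = k%:R * s ^+ k.-1 * f x.
Proof.
move=> hk; have pf1 := homog_pf hk.
have h1 := pf_chain pf1 (c := fun u : R => u *: x) (c' := fun i => x 0 i) (t := s).
have h2 : is_derive s (1:R) (f \o (fun u : R => u *: x)) (k%:R * s ^+ k.-1 * f x).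
  have -> : f \o (fun u : R => u *: x) = (fun u => u ^+ k * f x).
    by apply: funext => u; rewrite /= (homog_scale _ _ hk).
  exact: isd_pow.
apply: isd_uniq h2; apply: h1 => i.
have -> : (fun u : R => (u *: x) 0 i) = (fun u => u * x 0 i).
  by apply: funext => u; rewrite mxE.
exact: isd_lin.
Qed.

Lemma euler2 k (f : V -> R) (x : V) : homog_poly k f ->
  \sum_i x 0 i * \sum_j x 0 j * 'D_(delta_mx 0 j) ('D_(delta_mx 0 i) f) x = k%:R * k.-1%:R * f x.
Proof.
move=> hk; have pf1 := homog_pf hk.
have h2 : is_derive (1:R) (1:R) (fun s : R => \sum_i x 0 i * 'D_(delta_mx 0 i) f (s *: x))
   (k%:R * (k.-1%:R * 1 ^+ k.-1.-1 * f x)).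
  have -> : (fun s : R => \sum_i x 0 i * 'D_(delta_mx 0 i) f (s *: x)) =
            (fun s => s ^+ k.-1 * (k%:R * f x)).
    by apply: funext => s; rewrite (euler1 _ _ hk); ring.
  apply: (is_derive_eq (isd_pow _ _ _)); ring.
have h1 : is_derive (1:R) (1:R) (fun s : R => \sum_i x 0 i * 'D_(delta_mx 0 i) f (s *: x))
   (\sum_i x 0 i * \sum_j x 0 j * 'D_(delta_mx 0 j) ('D_(delta_mx 0 i) f) x).
  apply: isd_sum => i; apply: isd_scal.
  have := pf_chain (pf_D pf1 (delta_mx 0 i)) (c := fun u : R => u *: x)
     (c' := fun i => x 0 i) (t := 1).
  rewrite scale1r; apply => j.
  have -> : (fun u : R => (u *: x) 0 j) = (fun u => u * x 0 j).
    by apply: funext => u; rewrite mxE.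
  exact: isd_lin.
rewrite (isd_uniq h1 h2) expr1n; ring.
Qed.

End Homog.



Section D2.
Variable R : realType.

Lemma isd_mul (g1 g2 : R -> R) t d1 d2 : is_derive t (1:R) g1 d1 ->
  is_derive t (1:R) g2 d2 ->
  is_derive t (1:R) (fun s => g1 s * g2 s) (g1 t * d2 + g2 t * d1).
Proof. by move=> h1 h2; have := is_deriveM h1 h2. Qed.

Lemma isd_cs2 (t a b : R) :
  is_derive t (1:R) (fun s => - sin s * a + cos s * b) (- cos t * a - sin t * b).
Proof.
have -> : (fun s : R => - sin s * a + cos s * b) = (fun s => cos s * b + sin s * (-a)).
  by apply: funext => s; ring.
apply: (is_derive_eq (isd_cs _ _ _)); ring.
Qed.

Lemma dv_sum n (G : 'I_n -> R -> R) (t : R) :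
  (forall i, derivable (G i) t 1) -> derivable (fun s => \sum_(i < n) G i s) t 1.
Proof. by move=> h; have := derivable_sum h; rewrite fct_sumE. Qed.

Lemma dv_mul (g1 g2 : R -> R) (t : R) : derivable g1 t 1 -> derivable g2 t 1 ->
  derivable (fun s => g1 s * g2 s) t 1.
Proof. by move=> h1 h2; have := derivableM h1 h2. Qed.

Lemma isd_derive1 (g : R -> R) t d : is_derive t (1:R) g d -> derive1 g t = d.
Proof. by move=> h; rewrite derive1E derive_val. Qed.

End D2.

Section Geod.
Variables (R : realType) (n : nat).
Local Notation V := 'rV[R]_n.

Lemma geod2 (f : V -> R) (x e : V) : pf f ->
  derive1 (derive1 (fun t : R => f (cos t *: x + sin t *: e))) 0 =
  \sum_i (e 0 i * \sum_j e 0 j * 'D_(delta_mx 0 j) ('D_(delta_mx 0 i) f) x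
          - x 0 i * 'D_(delta_mx 0 i) f x).
Proof.
move=> pf1.
pose c := fun t : R => cos t *: x + sin t *: e.
pose c' := fun (t : R) (i : 'I_n) => - sin t * x 0 i + cos t * e 0 i.
have hc : forall t i, is_derive t (1:R) (fun s => c s 0 i) (c' t i).
  move=> t i; have -> : (fun s => c s 0 i) = (fun s => cos s * x 0 i + sin s * e 0 i).
    by apply: funext => s; rewrite /c !mxE.
  exact: isd_cs.
have c0 : c 0 = x by rewrite /c cos0 sin0 scale1r scale0r addr0.
have -> : derive1 (fun t : R => f (cos t *: x + sin t *: e)) =
          (fun t => \sum_i c' t i * 'D_(delta_mx 0 i) f (c t)).
  apply: funext => t; apply: isd_derive1.
  exact: (pf_chain pf1 (hc t)).
apply: isd_derive1.
apply: (is_derive_eq (isd_sum _)) => [i|].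
  apply: isd_mul; last first.
    exact: (pf_chain (pf_D pf1 _) (hc 0)).
rewrite /=. apply: (@eq_bigr R). move=> i _. rewrite /c' c0 cos0 sin0 /GRing.scale /=.
rewrite (_ : \sum_(i0 < n) _ = \sum_(j < n) e 0 j * 'D_(delta_mx 0 j) ('D_(delta_mx 0 i) f) x); last first.
  by apply: eq_bigr => j _; ring.
ring.
Qed.

End Geod.

Section Geod2.
Variables (R : realType) (n : nat).
Local Notation V := 'rV[R]_n.

Lemma geod_derivable (f : V -> R) (x e : V) : pf f ->
  (forall t, derivable (fun t : R => f (cos t *: x + sin t *: e)) t 1) /\
  derivable (derive1 (fun t : R => f (cos t *: x + sin t *: e))) 0 1.
Proof.
move=> pf1.
pose c := fun t : R => cos t *: x + sin t *: e.
pose c' := fun (t : R) (i : 'I_n) => - sin t * x 0 i + cos t * e 0 i.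
have hc : forall t i, is_derive t (1:R) (fun s => c s 0 i) (c' t i).
  move=> t i; have -> : (fun s => c s 0 i) = (fun s => cos s * x 0 i + sin s * e 0 i).
    by apply: funext => s; rewrite /c !mxE.
  exact: isd_cs.
split=> [t|].
  by have [] := pf_chain pf1 (hc t).
have -> : derive1 (fun t : R => f (cos t *: x + sin t *: e)) =
          (fun t => \sum_i c' t i * 'D_(delta_mx 0 i) f (c t)).
  apply: funext => t; apply: isd_derive1.
  exact: (pf_chain pf1 (hc t)).
apply: dv_sum => i; apply: dv_mul.
  by have [] := isd_cs2 0 (x 0 i) (e 0 i).
by have [] := pf_chain (pf_D pf1 (delta_mx 0 i)) (hc 0).
Qed.

End Geod2.



Section Frame.
Variables (R : realType) (m : nat).
Local Notation V := 'rV[R]_(m.+1).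

Lemma dotrC (u v : V) : dotr u v = dotr v u.
Proof. by rewrite /dotr; apply: eq_bigr => i _; rewrite mulrC. Qed.

Lemma frame_compl (x : V) (e : 'I_m -> V) :
  dotr x x = 1 -> (forall a, dotr (e a) x = 0) ->
  (forall a b, dotr (e a) (e b) = (a == b)%:R) ->
  forall i j, \sum_a e a 0 i * e a 0 j = (i == j)%:R - x 0 i * x 0 j.
Proof.
move=> hx hex he i j.
pose Q : 'M[R]_(m.+1) := \matrix_(r, l) (match unlift ord0 r with
                                         Some a => e a 0 l | None => x 0 l end).
have QQ : Q *m Q^T = 1%:M.
  apply/matrixP => r s; rewrite !mxE.
  transitivity (match unlift ord0 r, unlift ord0 s with
                | Some a, Some b => dotr (e a) (e b)
                | Some a, None => dotr (e a) x
                | None, Some b => dotr x (e b)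
                | None, None => dotr x x end).
    rewrite /dotr; under eq_bigr do rewrite !mxE; by case: (unlift _ r) => [a|]; case: (unlift _ s) => [b|].
  case: unliftP => [a ->|->]; case: unliftP => [b ->|->].
  - by rewrite he (inj_eq lift_inj).
  - by rewrite hex.
  - by rewrite dotrC hex.
  - by rewrite hx eqxx.
have := mulmx1C QQ => /matrixP /(_ i j); rewrite !mxE big_ord_recl /=.
rewrite !mxE unlift_none.
under eq_bigr do rewrite !mxE liftK.
by move=> <-; ring.
Qed.

Lemma tension_scalar k (f : V -> R) (x : V) (e : 'I_m -> V) :
  homog_poly k f ->
  \sum_i 'D_(delta_mx 0 i) ('D_(delta_mx 0 i) f) x = 0 ->
  dotr x x = 1 -> (forall a, dotr (e a) x = 0) ->
  (forall a b, dotr (e a) (e b) = (a == b)%:R) ->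
  \sum_a derive1 (derive1 (fun t : R => f (cos t *: x + sin t *: e a))) 0 =
  - ((k * k.-1 + m * k)%N%:R * f x).
Proof.
move=> hk hL hx hex he.
have pf1 := homog_pf hk.
under eq_bigr do rewrite (geod2 _ _ pf1).
under eq_bigr do rewrite sumrB.
rewrite sumrB.
set H := fun i j : 'I_m.+1 => 'D_(delta_mx 0 j) ('D_(delta_mx 0 i) f) x.
have E1 : \sum_(a < m) \sum_i e a 0 i * \sum_j e a 0 j * H i j =
          \sum_i \sum_j (\sum_a e a 0 i * e a 0 j) * H i j.
  rewrite exchange_big; apply: eq_bigr => i _.
  transitivity (\sum_(a < m) \sum_j e a 0 i * e a 0 j * H i j).
    by apply: eq_bigr => a _; rewrite big_distrr; apply: eq_bigr => j _; rewrite /= mulrA.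
  by rewrite exchange_big; apply: eq_bigr => j _; rewrite big_distrl.
rewrite E1.
under eq_bigr do under eq_bigr do rewrite (frame_compl hx hex he) mulrBl.
under eq_bigr do rewrite sumrB.
rewrite sumrB.
have E2 : \sum_i \sum_j (i == j)%:R * H i j = 0.
  transitivity (\sum_i H i i); last exact: hL.
  apply: eq_bigr => i _.
  rewrite (bigD1 i) //= big1 => [|j /negbTE hj]; first by rewrite eqxx mul1r addr0.
  by rewrite eq_sym hj mul0r.
rewrite E2.
have E3 : \sum_i \sum_j x 0 i * x 0 j * H i j = k%:R * k.-1%:R * f x.
  rewrite -(euler2 x hk); apply: eq_bigr => i _; rewrite big_distrr.
  by apply: eq_bigr => j _; rewrite /= mulrA.
rewrite E3.
have E4 : \sum_i x 0 i * 'D_(delta_mx 0 i) f x = k%:R * f x.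
  by have := euler1 x 1 hk; rewrite scale1r expr1n mulr1.
under eq_bigr do rewrite E4.
rewrite sumr_const card_ord -mulr_natl natrD !natrM; ring.
Qed.

End Frame.



Section Vec.
Variable R : realType.

Lemma derive1_row p (h : R -> 'rV[R]_p) (t : R) :
  (forall q, derivable (fun s => h s 0 q) t 1) ->
  derive1 h t = \row_q derive1 (fun s => h s 0 q) t.
Proof.
move=> hd.
have dh : derivable h t 1.
  by apply/derivable_mxP => i j; rewrite ord1; exact: hd.
rewrite derive1E (derive_mx dh); apply/matrixP => i j; rewrite !mxE ord1.
by rewrite derive1E.
Qed.

Lemma geod_second_row m p (phi : 'rV[R]_(m.+1) -> 'rV[R]_p) (x e : 'rV[R]_(m.+1)) :
  (forall q, pf (fun y => phi y 0 q)) ->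
  geod_second phi x e =
  \row_q derive1 (derive1 (fun t : R => phi (cos t *: x + sin t *: e) 0 q)) 0.
Proof.
move=> hp; rewrite /geod_second.
have -> : derive1 (fun t : R => phi (cos t *: x + sin t *: e)) =
   (fun t => \row_q derive1 (fun t : R => phi (cos t *: x + sin t *: e) 0 q) t).
  apply: funext => t; apply: derive1_row => q.
  by have [] := geod_derivable x e (hp q).
rewrite derive1_row; last first.
  move=> q; under eq_fun do rewrite mxE.
  by have [] := geod_derivable x e (hp q).
apply/matrixP => i q; rewrite !mxE.
by under eq_fun do rewrite mxE.
Qed.

Lemma dotr_row_mx p1 p2 (a c : 'rV[R]_p1) (b d : 'rV[R]_p2) :
  dotr (row_mx a b) (row_mx c d) = dotr a c + dotr b d.
Proof. by rewrite /dotr big_split_ord /=; congr (_ + _); apply: eq_bigr => i _;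
  rewrite ?row_mxEl ?row_mxEr. Qed.

Lemma dotrZ p (a : R) (u v : 'rV[R]_p) : dotr (a *: u) v = a * dotr u v.
Proof. by rewrite /dotr big_distrr; apply: eq_bigr => i _; rewrite mxE /= mulrA. Qed.

Lemma dotr_suml p I (r : seq I) (F : I -> 'rV[R]_p) (y : 'rV[R]_p) :
  dotr (\sum_(a <- r) F a) y = \sum_(a <- r) dotr (F a) y.
Proof.
rewrite /dotr exchange_big; apply: eq_bigr => i _.
by rewrite summxE big_distrl.
Qed.

Lemma tproj_sum p I (r : seq I) (F : I -> 'rV[R]_p) (y : 'rV[R]_p) :
  \sum_(a <- r) tproj y (F a) = tproj y (\sum_(a <- r) F a).
Proof. by rewrite /tproj sumrB dotr_suml scaler_suml. Qed.

Lemma dotr_delta p (i j : 'I_p) : dotr (delta_mx 0 i : 'rV[R]_p) (delta_mx 0 j) = (i == j)%:R.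
Proof.
rewrite /dotr (bigD1 j) //= big1 => [|l /negbTE hl]; last by rewrite !mxE hl andbF mulr0.
rewrite !mxE !eqxx /= mulr1 addr0.
by rewrite eq_sym.
Qed.

Lemma lam_inj m k1 k2 : (1 <= m)%N ->
  (k1 * k1.-1 + m * k1 = k2 * k2.-1 + m * k2)%N -> k1 = k2.
Proof.
move=> hm; case: k1 => [|a]; case: k2 => [|b] //=; nia.
Qed.

End Vec.

Unset Implicit Arguments. Set Strict Implicit.
Theorem mainTheorem4 (R : realType) (m n1 n2 k1 k2 : nat) (r1 r2 : R)
  (F1 : 'rV[R]_(m.+1) -> 'rV[R]_(n1.+1))
  (F2 : 'rV[R]_(m.+1) -> 'rV[R]_(n2.+1)) :
  (1 <= m)%N -> 0 < r1 -> 0 < r2 -> r1 ^+ 2 + r2 ^+ 2 = 1 ->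
  is_form k1 F1 -> is_form k2 F2 ->
  (forall x, dotr (F1 x) (F1 x) = r1 ^+ 2 * (dotr x x) ^+ k1) ->
  (forall x, dotr (F2 x) (F2 x) = r2 ^+ 2 * (dotr x x) ^+ k2) ->
  flat_laplacian_zero F1 -> flat_laplacian_zero F2 ->
  (harmonic_sphere_map (fun x => row_mx (F1 x) (F2 x)) <-> k1 = k2).
Proof.
move=> hm hr1 hr2 hr hf1 hf2 hn1 hn2 hL1 hL2.
set phi := fun x => row_mx (F1 x) (F2 x).
set l1 : R := (k1 * k1.-1 + m * k1)%N%:R.
set l2 : R := (k2 * k2.-1 + m * k2)%N%:R.
set mu : R := l1 * r1 ^+ 2 + l2 * r2 ^+ 2.
have c1 : forall y j, phi y 0 (lshift _ j) = F1 y 0 j by move=> y j; rewrite /phi row_mxEl.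
have c2 : forall y j, phi y 0 (rshift _ j) = F2 y 0 j by move=> y j; rewrite /phi row_mxEr.
have hpf : forall q, pf (fun y => phi y 0 q).
  move=> q; case: (split_ordP q) => j ->.
    have -> : (fun y => phi y 0 (lshift _ j)) = (fun y => F1 y 0 j).
      by apply: funext => y; rewrite c1.
    exact: homog_pf (hf1 j).
  have -> : (fun y => phi y 0 (rshift _ j)) = (fun y => F2 y 0 j).
    by apply: funext => y; rewrite c2.
  exact: homog_pf (hf2 j).
have key : forall (x : 'rV[R]_(m.+1)) (e : 'I_m -> 'rV[R]_(m.+1)),
    dotr x x = 1 -> (forall a, dotr (e a) x = 0) ->
    (forall a b, dotr (e a) (e b) = (a == b)%:R) ->
    \sum_(a < m) tproj (phi x) (geod_second phi x (e a)) =
    row_mx ((mu - l1) *: F1 x) ((mu - l2) *: F2 x).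
  move=> x e hx hex he.
  rewrite tproj_sum.
  have G : \sum_(a < m) geod_second phi x (e a) = row_mx (- l1 *: F1 x) (- l2 *: F2 x).
    apply/matrixP => i q; rewrite ord1 summxE.
    under eq_bigr do rewrite (geod_second_row _ _ hpf) mxE.
    case: (split_ordP q) => j ->.
      rewrite row_mxEl mxE.
      transitivity (\sum_(a < m) derive1 (derive1 (fun t : R => F1 (cos t *: x + sin t *: e a) 0 j)) 0).
        apply: eq_bigr => a _; congr (derive1 (derive1 _) 0); apply: funext => t.
        by rewrite c1.
      rewrite (tension_scalar (f := fun y => F1 y 0 j) (hf1 j) _ hx hex he); last first.
        by apply/eqP; rewrite -oppr_eq0; apply/eqP; exact: hL1.
      by rewrite mulNr.
    rewrite row_mxEr mxE.
    transitivity (\sum_(a < m) derive1 (derive1 (fun t : R => F2 (cos t *: x + sin t *: e a) 0 j)) 0).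
      apply: eq_bigr => a _; congr (derive1 (derive1 _) 0); apply: funext => t.
      by rewrite c2.
    rewrite (tension_scalar (f := fun y => F2 y 0 j) (hf2 j) _ hx hex he); last first.
      by apply/eqP; rewrite -oppr_eq0; apply/eqP; exact: hL2.
    by rewrite mulNr.
  rewrite G /tproj /phi dotr_row_mx !dotrZ hn1 hn2 hx !expr1n !mulr1.
  rewrite scale_row_mx opp_row_mx add_row_mx -!scalerBl.
  by congr row_mx; congr (_ *: _); rewrite /mu; ring.
have dotr0 : forall p (v : 'rV[R]_p), dotr 0 v = 0.
  by move=> p v; rewrite /dotr big1 // => i _; rewrite mxE mul0r.
split.
- case=> _ hh.
  have o1 : dotr (delta_mx 0 0 : 'rV[R]_(m.+1)) (delta_mx 0 0) = 1.
    by rewrite dotr_delta eqxx.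
  have o2 : forall a : 'I_m, dotr (delta_mx 0 (lift 0 a) : 'rV[R]_(m.+1)) (delta_mx 0 0) = 0.
    by move=> a; rewrite dotr_delta eq_sym (negbTE (neq_lift _ _)).
  have o3 : forall a b : 'I_m, dotr (delta_mx 0 (lift 0 a) : 'rV[R]_(m.+1)) (delta_mx 0 (lift 0 b)) = (a == b)%:R.
    by move=> a b; rewrite dotr_delta (inj_eq lift_inj).
  have := key _ _ o1 o2 o3.
  rewrite (hh _ _ o1 o2 o3).
  move=> /esym; rewrite -row_mx0 => /eq_row_mx [h1 _].
  have := congr1 (fun v => dotr v (F1 (delta_mx 0 0))) h1.
  rewrite /= dotrZ dotr0 hn1 dotr_delta eqxx expr1n mulr1 => /eqP.
  rewrite mulf_eq0 sqrf_eq0 (gt_eqF hr1) orbF subr_eq0 => /eqP hmu.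
  have : (l2 - l1) * r2 ^+ 2 = 0.
    have e1 : l2 * r2 ^+ 2 = mu - l1 * r1 ^+ 2 by rewrite /mu; ring.
    rewrite hmu in e1.
    rewrite mulrBl e1.
    have -> : l1 - l1 * r1 ^+ 2 - l1 * r2 ^+ 2 = l1 * (1 - (r1 ^+ 2 + r2 ^+ 2)) by ring.
    by rewrite hr subrr mulr0.
  move=> /eqP; rewrite mulf_eq0 sqrf_eq0 (gt_eqF hr2) orbF subr_eq0 => /eqP.
  rewrite /l1 /l2 => /eqP; rewrite eqr_nat => /eqP h.
  by apply: lam_inj hm (esym h).
- move=> k12; split.
    by move=> x hx; rewrite /phi dotr_row_mx hn1 hn2 hx !expr1n !mulr1.
  move=> x e hx hex he; rewrite key //.
  have -> : mu - l1 = 0 by rewrite /mu /l2 -k12 -/l1 -mulrDr hr mulr1 subrr.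
  have -> : mu - l2 = 0 by rewrite /mu /l1 k12 -/l2 -mulrDr hr mulr1 subrr.
  by rewrite !scale0r row_mx0.
Qed.
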